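(* Fix $s,s'\in S$ with $s\ne s_\star$, $j\in\{1,\dots,J\}$, and $a\in Act(s)$ with interface function $I_{s,a}\equiv\bar u_j$. Let $\mathbf{D}_N=\{(x_i,u_i,x_i^+)\}_{i=1}^N$ be a dataset with $x_i^+=f(x_i,u_i,\eta(\omega_i))$, where the noise outcomes $\omega_i$ are i.i.d. samples from $\mathbb{P}$ (and unobserved). Let $\mathbf{D}_N(\mathcal{T}^{-1}(s),\bar U_j)=\{(x,u,x^+)\in\mathbf{D}_N: x\in\mathcal{T}^{-1}(s),\ u\in\bar U_j\}=\{(x_i,u_i,x_i^+)\}_{i=1}^{M}$ (after relabelling), $M=|\mathbf{D}_N(\mathcal{T}^{-1}(s),\bar U_j)|$, and $F_i=\widehat F(x_i,u_i,x_i^+)$ for $i=1,\dots,M$. Define $$\check M=|\{i: F_i\subseteq\mathcal{T}^{-1}(s')\}|,\qquad \hat M=|\{i: F_i\cap\mathcal{T}^{-1}(s')\neq\emptyset\}|,$$ and, for $\beta\in(0,1)$, $\check P_{lb}=0$ if $\check M=0$ and otherwise the solution of $\frac{\beta}{2}=\sum_{\ell=\check M}^{M}\binom{M}{\ell}\check P_{lb}^{\ell}(1-\check P_{lb})^{M-\ell}$; $\hat P_{ub}=1$ if $\hat M=M$ and otherwise the solution of $\frac{\beta}{2}=\sum_{\ell=0}^{\hat M}\binom{M}{\ell}\hat P_{ub}^{\ell}(1-\hat P_{ub})^{M-\ell}$. Then, with probability at least $1-\beta$ over the noise samples, $$\check P_{lb}\le\check p(s,a,s')\quad\text{and}\quad\hat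 p(s,a,s')\le\hat P_{ub}.$$
   Context: System: $x_{k+1}=f(x_k,u_k,\eta_k)$ with $\mathcal{X}\subset\mathbb{R}^n$ compact, $\mathcal{U}\subseteq\mathbb{R}^m$, noise $\eta:\Omega\to\mathcal{W}$ on $(\Omega,\mathcal{F},\mathbb{P})$, $f:\mathcal{X}\times\mathcal{U}\times\mathcal{W}\to\mathcal{X}$ unknown but Lipschitz: there are known $L_X,L_U>0$ with $\|f(x_1,u_1,\eta(\omega))-f(x_2,u_2,\eta(\omega))\|\le L_X\|x_1-x_2\|+L_U\|u_1-u_2\|$ for all $x_1,x_2\in\mathcal{X}$, $u_1,u_2\in\mathcal{U}$, $\omega\in\Omega$. $\mathcal{X}$ is partitioned into disjoint convex polytopes $R_1,\dots,R_v$, $R_\star=\mathbb{R}^n\setminus\mathcal{X}$, abstract states $S=\{s_1,\dots,s_v,s_\star\}$, $\mathcal{T}(x)=s_i\iff x\in R_i$, $\mathcal{T}^{-1}(s)$ the region of $s$. $\mathcal{U}$ is partitioned into disjoint $\bar U_1,\dots,\bar U_J$ with representatives $\bar u_j\in\bar U_j$. For $a\in Act(s)$ the interface function is $I_{s,a}:\mathcal{T}^{-1}(s)\to\{\bar u_1,\dots,\bar u_J\}$. For compact $X'$: $\psi(x,X',a)=\mathbb{P}\{\omega: f(x,I_{\mathcal{T}(x),a}(x),\eta(\omega))\in X'\}$, $\check p(s,a,s')=\min_{x\in\mathcal{T}^{-1}(s)}\psi(x,\mathcal{T}^{-1}(s'),a)$, $\hat p(s,a,s')=\max_{x\in\mathcal{T}^{-1}(s)}\psi(x,\mathcal{T}^{-1}(s'),a)$.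 For a sample $(x,u,x^+)$ with $x\in\mathcal{T}^{-1}(s)$, $u\in\bar U_j$: $\widehat F(x,u,x^+)=\{\tilde x\in\mathcal{X}: \|\tilde x-x^+\|\le L_U\|u-\bar u_j\|+L_X\max_{\hat x\in\mathcal{T}^{-1}(s)}\|x-\hat x\|\}$. *)

(* Defs.v *)
From HB Require Import structures.
From mathcomp Require Import all_boot all_order all_algebra.
From mathcomp Require Import all_classical all_reals all_analysis.
Set Implicit Arguments. Unset Strict Implicit. Unset Printing Implicit Defensive.
Import Order.TTheory GRing.Theory Num.Theory.
Import numFieldNormedType.Exports.
Local Open Scope classical_set_scope.
Local Open Scope ring_scope.

Definition convex_region (R : realType) (V : lmodType R) (A : set V) : Prop :=
  forall x y (t : R), 0 <= t <= 1 -> A x -> A y -> A (t *: x + (1 - t) *: y).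

(* Abstract states: S = {s_1..s_v} U {s_star}, encoded as option 'I_v
   (None = s_star).  Region of an abstract state: T^{-1}(s). *)
Definition region (V : Type) (v : nat) (X : set V) (Rg : 'I_v -> set V)
  (s : option 'I_v) : set V :=
  match s with Some i => Rg i | None => ~` X end.

Definition iid_samples (R : realType) (d d' : measure_display)
  (Om : measurableType d) (P : probability Om R)
  (Om' : measurableType d') (P' : probability Om' R)
  (N : nat) (w : 'I_N -> Om' -> Om) : Prop :=
  (forall i, measurable_fun setT (w i)) /\
  (forall A : 'I_N -> set Om, (forall i, measurable (A i)) ->
     P' (\bigcap_i (w i @^-1` A i)) = (\prod_(i < N) P (A i))%E).

(* psi(x, X', a) for x in T^{-1}(s) (so that T(x) = s). *)
Definition psi (R : realType) (d : measure_display) (Om : measurableType d)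
  (P : probability Om R) (W V U S A : Type) (f : V -> U -> W -> V)
  (eta : Om -> W) (I : S -> A -> V -> U) (s : S) (a : A) (x : V)
  (X' : set V) : R :=
  fine (P [set om | X' (f x (I s a x) (eta om))]).

Definition Fhat (R : realType) (V U : normedModType R) (X : set V)
  (LX LU : R) (Rs : set V) (ub : U) (x : V) (u : U) (xp : V) : set V :=
  [set xt | X xt /\
     `|xt - xp| <= LU * `|u - ub| + LX * sup [set `|x - xh| | xh in Rs]].

Definition Plb_spec (R : realType) (M Mc : nat) (beta p : R) : Prop :=
  if Mc == 0%N then p = 0
  else 0 <= p <= 1 /\
       beta / 2 = \sum_(Mc <= l < M.+1) 'C(M, l)%:R * p ^+ l * (1 - p) ^+ (M - l).

Definition Pub_spec (R : realType) (M Mh : nat) (beta p : R) : Prop :=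
  if Mh == M then p = 1
  else 0 <= p <= 1 /\
       beta / 2 = \sum_(0 <= l < Mh.+1) 'C(M, l)%:R * p ^+ l * (1 - p) ^+ (M - l).

(* Main.v *)
Require Import Defs.
From HB Require Import structures.
From mathcomp Require Import all_boot all_order all_algebra.
From mathcomp Require Import all_classical all_reals all_analysis.
Import Order.TTheory GRing.Theory Num.Theory.
Import numFieldNormedType.Exports.
Local Open Scope classical_set_scope.
Local Open Scope ring_scope.

From mathcomp Require Import ring lra.
Section Binom.
Variable R : realType.
Implicit Types p q : R.

Definition bterm (n l : nat) p : R := 'C(n, l)%:R * p ^+ l * (1 - p) ^+ (n - l).
Definition T (n k : nat) p : R := \sum_(l < n.+1) (if (k <= l)%N then bterm n l p else 0).

Lemma bterm_ge0 n l p : 0 <= p <= 1 -> 0 <= bterm n l p.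
Proof.
move=> /andP[p0 p1]; rewrite /bterm; apply: mulr_ge0; first apply: mulr_ge0.
- exact: ler0n.
- exact: exprn_ge0.
- by apply: exprn_ge0; rewrite subr_ge0.
Qed.

Lemma T_ge0 n k p : 0 <= p <= 1 -> 0 <= T n k p.
Proof.
move=> hp; rewrite /T; apply: sumr_ge0 => l _; case: ifP => // _; exact: bterm_ge0.
Qed.

Lemma T_big n k p : (n < k)%N -> T n k p = 0.
Proof.
move=> nk; rewrite /T big1 // => l _; case: ifP => // kl.
have := ltn_ord l; rewrite ltnS => ln; have := leq_trans kl ln; by rewrite leqNgt nk.
Qed.

Lemma T0 n p : T n 0 p = 1.
Proof.
rewrite /T; have := exprDn (1 - p) p n; rewrite subrK expr1n => ->.
apply: eq_bigr => l _ /=; rewrite /bterm -mulr_natl; ring.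
Qed.

Lemma T_monok n k p : 0 <= p <= 1 -> T n k.+1 p <= T n k p.
Proof.
move=> hp; rewrite /T; apply: ler_sum => l _.
case: ifP => h1; first by rewrite (ltnW h1).
case: ifP => // _; exact: bterm_ge0.
Qed.

Lemma T_monok_le n k k' p : 0 <= p <= 1 -> (k <= k')%N -> T n k' p <= T n k p.
Proof.
move=> hp /subnK <-; elim: (k' - k)%N => [|m IH] //=.
by rewrite addSn (le_trans (T_monok _ _ _ hp)).
Qed.

Lemma T_aux n k p : (1 - p) * T n k.+1 p =
  \sum_(i < n.+1) (if (k <= i)%N then 'C(n, i.+1)%:R * p ^+ i.+1 * (1 - p) ^+ (n - i) else 0).
Proof.
rewrite [RHS]big_ord_recr /= bin_small // mul0r mul0r if_same addr0.
rewrite /T big_ord_recl /= mulrDr mulr0 add0r mulr_sumr.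
apply: eq_bigr => i _; rewrite /bump /= !add1n ltnS.
case: ifP => ki; rewrite ?mulr0 // /bterm.
have -> : (n - i = (n - i.+1).+1)%N by rewrite subnS prednK // subn_gt0.
rewrite [(1 - p) ^+ (_.+1)]exprS; ring.
Qed.

Lemma T_pascal n k p : T n.+1 k.+1 p = p * T n k p + (1 - p) * T n k.+1 p.
Proof.
rewrite T_aux /T big_ord_recl /= add0r mulr_sumr -big_split /=.
apply: eq_bigr => i _; rewrite /bump /= !add1n ltnS.
case: ifP => // ki; last by rewrite mulr0 addr0.
rewrite /bterm binS natrD subSS exprS; ring.
Qed.

Lemma T_monop n : forall k p q, 0 <= p -> p <= q -> q <= 1 -> T n k p <= T n k q.
Proof.
elim: n => [|n IH] k p q p0 pq q1.
  rewrite /T !big_ord1 /bterm !expr0 !mulr1; exact: le_refl.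
case: k => [|k]; first by rewrite !T0.
have hp : 0 <= p <= 1 by rewrite p0 (le_trans pq q1).
have hq : 0 <= q <= 1 by rewrite q1 (le_trans p0 pq).
rewrite !T_pascal.
have h1 := IH k p q p0 pq q1.
have h2 := IH k.+1 p q p0 pq q1.
have h3 := T_monok n k p hp.
have h4 := T_ge0 n k.+1 p hp.
set Ap := T n k p in h1 h3 *; set Aq := T n k q in h1 *.
set Bp := T n k.+1 p in h2 h3 h4 *; set Bq := T n k.+1 q in h2 *.
have e : q * Aq + (1 - q) * Bq - (p * Ap + (1 - p) * Bp) =
  q * (Aq - Ap) + (1 - q) * (Bq - Bp) + (q - p) * (Ap - Bp) by ring.
rewrite -subr_ge0 e; apply: addr_ge0; first apply: addr_ge0.
- apply: mulr_ge0; [exact: le_trans pq | by rewrite subr_ge0].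
- by apply: mulr_ge0; rewrite subr_ge0.
- by apply: mulr_ge0; rewrite subr_ge0.
Qed.

Lemma Plb_T M k p :
  \sum_(k <= l < M.+1) 'C(M, l)%:R * p ^+ l * (1 - p) ^+ (M - l) = T M k p.
Proof.
rewrite big_geq_mkord big_mkcond /T; apply: eq_bigr => l _ /=; done.
Qed.

Lemma Pub_T M k p : (k < M)%N ->
  \sum_(0 <= l < k.+1) 'C(M, l)%:R * p ^+ l * (1 - p) ^+ (M - l) = 1 - T M k.+1 p.
Proof.
move=> kM; rewrite big_mkord (@big_ord_widen _ 0 +%R k.+1 M.+1 (fun l => 'C(M, l)%:R * p ^+ l * (1 - p) ^+ (M - l))) //.
rewrite big_mkcond; transitivity (T M 0 p - T M k.+1 p); last by rewrite T0.
rewrite /T -sumrB; apply: eq_bigr => l _ /=.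
case: ifP => h; case: ifP => hh; rewrite ?subr0 ?subrr //.
- by exfalso; move: hh; rewrite leqNgt h.
- by exfalso; move: h; rewrite ltnS leqNgt hh.
- exact: ltnW.
Qed.

End Binom.
Arguments T {R}.
Arguments bterm {R}.
Lemma probE (R : realType) (d : measure_display) (T0 : measurableType d)
  (P : probability T0 R) (E : set T0) : measurable E -> P E = (fine (P E))%:E.
Proof. by move=> mE; rewrite fineK //; apply: fin_num_measure. Qed.

Lemma prob01 (R : realType) (d : measure_display) (T0 : measurableType d)
  (P : probability T0 R) (E : set T0) : measurable E -> 0 <= fine (P E) <= 1.
Proof.
move=> mE; rewrite fine_ge0 ?measure_ge0 //=.
rewrite -lee_fin -probE //; exact: probability_le1.
Qed.

Section Prob.
Variables (R : realType) (d d' : measure_display) (Om : measurableType d)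
  (P : probability Om R) (Om' : measurableType d') (P' : probability Om' R)
  (N : nat) (w : 'I_N -> Om' -> Om).
Hypothesis hw : iid_samples P P' w.
Variable A : set Om.
Hypothesis mA : measurable A.

Definition cnt (r : seq 'I_N) (om : Om') : nat := count (fun i => `[< A (w i om) >]) r.
Definition rect (C : 'I_N -> set Om) : set Om' := \bigcap_i (w i @^-1` C i).
Let p := fine (P A).

Lemma meas_pre i B : measurable B -> measurable (w i @^-1` B).
Proof. move=> mB; have := hw.1 i measurableT B mB; by rewrite setTI. Qed.

Lemma meas_rect C : (forall i, measurable (C i)) -> measurable (rect C).
Proof.
move=> mC; rewrite /rect; apply: fin_bigcap_measurable; first exact: finite_finset.
move=> i _; exact: meas_pre.
Qed.

Lemma cnt_cons_eq i r k :
  [set om | (k.+1 <= cnt (i :: r) om)%N] =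
  (w i @^-1` A `&` [set om | (k <= cnt r om)%N]) `|`
  (w i @^-1` (~` A) `&` [set om | (k.+1 <= cnt r om)%N]).
Proof.
apply/seteqP; split => om /=; rewrite /cnt /=;
  case: (pselect (A (w i om))) => h.
- by rewrite asboolT // add1n ltnS => ?; left.
- by rewrite asboolF // add0n => ?; right.
- by rewrite asboolT // add1n ltnS => -[[]|[]].
- by rewrite asboolF // add0n => -[[]|[]].
Qed.

Lemma meas_cnt r k : measurable [set om | (k <= cnt r om)%N].
Proof.
elim: r k => [|i r IH] [|k].
- by have -> : [set om : Om' | (0 <= cnt [::] om)%N] = setT by apply/seteqP; split.
- by have -> : [set om : Om' | (k.+1 <= cnt [::] om)%N] = set0 by apply/seteqP; split.
- by have -> : [set om : Om' | (0 <= cnt (i :: r) om)%N] = setT by apply/seteqP; split.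
- rewrite cnt_cons_eq; apply: measurableU; apply: measurableI => //;
    apply: meas_pre => //; exact: measurableC.
Qed.

Lemma iidE C : (forall i, measurable (C i)) ->
  P' (rect C) = (\prod_(i < N) fine (P (C i)))%:E.
Proof.
move=> mC; rewrite -prodEFin /rect hw.2 //; apply: eq_bigr => i _; exact: probE.
Qed.

Lemma rect_upd C i B : C i = setT ->
  rect (fun j => if j == i then B else C j) = w i @^-1` B `&` rect C.
Proof.
move=> Ci; apply/seteqP; split => om /=.
- move=> h; split; first by have := h i I; rewrite eqxx.
  move=> j _; have := h j I; case: eqP => [->|] //; by rewrite Ci.
- move=> [hB hC] j _; case: eqP => [->|_] //; exact: hC.
Qed.

Lemma tail_rect r : uniq r -> forall C, (forall i, measurable (C i)) ->
  (forall i, i \in r -> C i = setT) -> forall k,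
  P' ([set om | (k <= cnt r om)%N] `&` rect C) =
  (T (size r) k p * \prod_(i < N) fine (P (C i)))%:E.
Proof.
elim: r => [|i r IH] /= ur C mC Cr k.
  case: k => [|k].
    rewrite T0 mul1r -iidE //; congr (P' _); apply/seteqP; split => om /=; [by case | by move=> h; split].
  rewrite (@T_big _ 0 k.+1 p) // mul0r.
  have -> : [set om | (k.+1 <= cnt [::] om)%N] `&` rect C = set0.
    by apply/seteqP; split => om // [].
  exact: measure0.
move/andP: ur => [nir ur].
case: k => [|k].
  rewrite T0 mul1r -iidE //; congr (P' _); apply/seteqP; split => om /=; [by case | by move=> h; split].
have Ci : C i = setT by apply: Cr; rewrite inE eqxx.
pose CA := fun j => if j == i then A else C j.
pose CN := fun j => if j == i then ~` A else C j.
have mCA : forall j, measurable (CA j) by move=> j; rewrite /CA; case: eqP.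
have mCN : forall j, measurable (CN j).
  by move=> j; rewrite /CN; case: eqP => // _; exact: measurableC.
have CrA : forall j, j \in r -> CA j = setT.
  move=> j jr; rewrite /CA; case: eqP => [ji|_]; first by move: nir; rewrite -ji jr.
  by apply: Cr; rewrite inE jr orbT.
have CrN : forall j, j \in r -> CN j = setT.
  move=> j jr; rewrite /CN; case: eqP => [ji|_]; first by move: nir; rewrite -ji jr.
  by apply: Cr; rewrite inE jr orbT.
have eq : [set om | (k.+1 <= cnt (i :: r) om)%N] `&` rect C =
  ([set om | (k <= cnt r om)%N] `&` rect CA) `|`
  ([set om | (k.+1 <= cnt r om)%N] `&` rect CN).
  rewrite cnt_cons_eq /CA /CN !rect_upd //; apply/seteqP; split => om /=.
    by move=> [[[a b]|[a b]] c]; [left|right].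
  by move=> [[a [b c]]|[a [b c]]]; split => //; [left|right].
rewrite eq measureU //; first last.
- rewrite /CA /CN !rect_upd //; apply/seteqP; split => om //=.
  by move=> [[_ [a _]] [_ [b _]]].
- apply: measurableI; [exact: meas_cnt | exact: meas_rect].
- apply: measurableI; [exact: meas_cnt | exact: meas_rect].
have e1 := IH ur CA mCA CrA k. have e2 := IH ur CN mCN CrN k.+1.
etransitivity; first exact: (f_equal2 (fun a b => (a + b)%E) e1 e2).
set Q := \prod_(j < N | j != i) fine (P (C j)).
have hC : \prod_(j < N) fine (P (C j)) = Q.
  by rewrite (bigD1 i) //= Ci probability_setT /= mul1r.
have hCA : \prod_(j < N) fine (P (CA j)) = p * Q.
  rewrite (bigD1 i) //= /CA eqxx; congr (_ * _); apply: eq_bigr => j /negbTE ->; done.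
have hCN : \prod_(j < N) fine (P (CN j)) = (1 - p) * Q.
  rewrite (bigD1 i) //= /CN eqxx probability_setC // (@probE _ _ _ P A mA) -EFinB /=.
  congr (_ * _); apply: eq_bigr => j /negbTE ->; done.
rewrite hC hCA hCN -EFinD T_pascal; congr EFin; ring.
Qed.

Lemma tail_law r : uniq r -> forall k,
  P' [set om | (k <= cnt r om)%N] = (T (size r) k p)%:E.
Proof.
move=> ur k; have := tail_rect r ur (fun _ => setT) (fun _ => measurableT) (fun _ _ => erefl) k.
have -> : rect (fun _ => setT) = setT by apply/seteqP; split => om //.
rewrite setIT => ->; congr EFin; rewrite big1 ?mulr1 // => i _; by rewrite probability_setT.
Qed.

Lemma hp01 : 0 <= p <= 1.
Proof. exact: prob01. Qed.

Lemma check_bound r c : uniq r -> 0 <= c ->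
  exists E, measurable E /\ (P' E <= c%:E)%E /\
    forall om, T (size r) (cnt r om) p <= c -> E om.
Proof.
move=> ur c0.
have ex : exists k, T (size r) k p <= c by exists (size r).+1; rewrite T_big.
case: (ex_minnP ex) => k0 hk0 hmin.
exists [set om | (k0 <= cnt r om)%N]; split; first exact: meas_cnt.
split; first by rewrite tail_law // lee_fin.
by move=> om h; apply: hmin.
Qed.

Lemma hat_bound r c : uniq r -> 0 <= c -> c < 1 ->
  exists E, measurable E /\ (P' E <= c%:E)%E /\
    forall om, 1 - T (size r) (cnt r om).+1 p <= c -> E om.
Proof.
move=> ur c0 c1.
have ex : exists k, c < 1 - T (size r) k.+1 p by exists (size r); rewrite T_big // subr0.
case: (ex_minnP ex) => k1 hk1 hmin.
exists (~` [set om | (k1 <= cnt r om)%N]); split; first exact/measurableC/meas_cnt.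
split.
  rewrite probability_setC; last exact: meas_cnt.
  rewrite tail_law // -EFinB lee_fin.
  case: k1 hk1 hmin => [|k] hk1 hmin; first by rewrite T0 subrr.
  by rewrite leNgt; apply/negP => /hmin; rewrite ltnn.
move=> om h /= hk.
have : 1 - T (size r) k1.+1 p <= c.
  apply: le_trans h; rewrite lerD2l lerN2.
  by apply: (T_monok_le _ _ _ _ _ hp01); rewrite ltnS.
by rewrite leNgt hk1.
Qed.

End Prob.

Lemma fin_min (R : realType) (Pd : nat -> R -> Prop) (b : R) n :
  exists m, b < m /\ forall k, (k < n)%N -> forall q, Pd k q -> b < q ->
    exists q', Pd k q' /\ m <= q'.
Proof.
elim: n => [|n [m [bm hm]]].
  by exists (b + 1); split; [lra | by []].
case: (pselect (exists q, Pd n q /\ b < q)) => [[q [Pq bq]]|nq].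
  exists (Num.min m q); split; first by rewrite lt_min bm bq.
  move=> k; rewrite ltnS leq_eqVlt => /orP[/eqP ->|kn] q0 Pq0 bq0.
    by exists q; split => //; rewrite ge_min lexx orbT.
  have [q' [Pq' mq']] := hm k kn q0 Pq0 bq0.
  by exists q'; split => //; rewrite ge_min mq'.
exists m; split => // k; rewrite ltnS leq_eqVlt => /orP[/eqP ->|kn] q0 Pq0 bq0.
  by exfalso; apply: nq; exists q0.
exact: hm kn q0 Pq0 bq0.
Qed.

Lemma fin_max (R : realType) (Pd : nat -> R -> Prop) (b : R) n :
  exists m, m < b /\ forall k, (k < n)%N -> forall q, Pd k q -> q < b ->
    exists q', Pd k q' /\ q' <= m.
Proof.
have [m [bm hm]] := fin_min _ (fun k q => Pd k (- q)) (- b) n.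
exists (- m); split; first by rewrite ltrNl.
move=> k kn q Pq qb.
have Pq2 : Pd k (- - q) by rewrite opprK.
have qb2 : - b < - q by rewrite ltrN2.
have [q' [Pq' mq']] := hm k kn (- q) Pq2 qb2.
by exists (- q'); split => //; rewrite lerNl opprK.
Qed.

Lemma memset (N : nat) (b : pred 'I_N) i : (i \in [set i | b i]) = b i.
Proof. by apply/idP/idP; rewrite in_setE. Qed.

Lemma card_count (N : nat) (S Q : pred 'I_N) :
  #|[set i | S i && Q i]| = seq.count Q (enum [set i | S i]).
Proof.
have u : uniq [seq x <- enum [set i | S i] | Q x] by apply: filter_uniq; exact: enum_uniq.
rewrite -size_filter -(card_uniqP u); apply: eq_card => i.
by rewrite mem_filter mem_enum !memset andbC.
Qed.

Lemma card_le_count (N : nat) (S Q Q' : pred 'I_N) :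
  (forall i, S i -> Q i -> Q' i) ->
  (#|[set i | S i && Q i]| <= seq.count Q' (enum [set i | S i]))%N.
Proof.
move=> h; rewrite -card_count; apply: subset_leq_card; apply/fintype.subsetP => i.
by rewrite !memset => /andP[iS qi]; rewrite iS (h i iS qi).
Qed.

Lemma count_le_card (N : nat) (S Q Q' : pred 'I_N) :
  (forall i, S i -> Q' i -> Q i) ->
  (seq.count Q' (enum [set i | S i]) <= #|[set i | S i && Q i]|)%N.
Proof.
move=> h; rewrite -card_count; apply: subset_leq_card; apply/fintype.subsetP => i.
by rewrite !memset => /andP[iS qi]; rewrite iS (h i iS qi).
Qed.

Lemma card_le_all (N : nat) (S Q : pred 'I_N) :
  (#|[set i | S i && Q i]| <= #|[set i | S i]|)%N.
Proof.
apply: subset_leq_card; apply/fintype.subsetP => i.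
by rewrite !memset => /andP[].
Qed.
Theorem corollary1
  (R : realType) (V U : normedModType R) (d d' : measure_display)
  (* noise probability space and noise *)
  (Om : measurableType d) (P : probability Om R) (W : Type) (eta : Om -> W)
  (* state / input sets and the unknown dynamics *)
  (X : set V) (Uset : set U) (f : V -> U -> W -> V) (LX LU : R)
  (* state partition *)
  (v : nat) (Rg : 'I_v -> set V)
  (* input partition *)
  (J : nat) (Ubar : 'I_J -> set U) (ubar : 'I_J -> U)
  (* actions and interface functions *)
  (Act_t : Type) (Act : option 'I_v -> set Act_t)
  (I : option 'I_v -> Act_t -> V -> U)
  (* the fixed data of the corollary *)
  (s : 'I_v) (s' : option 'I_v) (j : 'I_J) (a : Act_t) (beta : R)
  (* the dataset: N samples, sample space of the noise outcomes *)
  (N : nat) (xs : 'I_N -> V) (us : 'I_N -> U)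
  (Om' : measurableType d') (P' : probability Om' R) (w : 'I_N -> Om' -> Om) :
  compact X ->
  0 < LX -> 0 < LU ->
  (forall x u om, X x -> Uset u -> X (f x u (eta om))) ->
  (forall x1 x2 u1 u2 om, X x1 -> X x2 -> Uset u1 -> Uset u2 ->
     `|f x1 u1 (eta om) - f x2 u2 (eta om)| <= LX * `|x1 - x2| + LU * `|u1 - u2|) ->
  (forall x u (k : option 'I_v), X x -> Uset u ->
     measurable [set om | region X Rg k (f x u (eta om))]) ->
  (forall i, convex_region (Rg i)) ->
  (forall i k, i != k -> Rg i `&` Rg k = set0) ->
  \bigcup_i Rg i = X ->
  (forall i k, i != k -> Ubar i `&` Ubar k = set0) ->
  \bigcup_i Ubar i = Uset ->
  (forall i, Ubar i (ubar i)) ->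
  (forall t b x, exists i, I t b x = ubar i) ->
  Act (Some s) a ->
  (forall x, Rg s x -> I (Some s) a x = ubar j) ->
  0 < beta < 1 ->
  (forall i, X (xs i)) -> (forall i, Uset (us i)) ->
  iid_samples P P' w ->
  let xplus i om' := f (xs i) (us i) (eta (w i om')) in
  let sel i := (xs i \in Rg s) && (us i \in Ubar j) in
  let M := #|[set i : 'I_N | sel i]| in
  let F i om' := Fhat X LX LU (Rg s) (ubar j) (xs i) (us i) (xplus i om') in
  let Mcheck om' :=
    #|[set i : 'I_N | sel i && `[< F i om' `<=` region X Rg s' >]]| in
  let Mhat om' :=
    #|[set i : 'I_N | sel i && `[< F i om' `&` region X Rg s' !=set0 >]]| in
  let pcheck := inf [set psi P f eta I (Some s) a x (region X Rg s') | x in Rg s] in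
  let phat := sup [set psi P f eta I (Some s) a x (region X Rg s') | x in Rg s] in
  exists G : set Om', measurable G /\ (P' G >= (1 - beta)%:E)%E /\
    forall om', G om' ->
      (forall p, Plb_spec M (Mcheck om') beta p -> p <= pcheck) /\
      (forall p, Pub_spec M (Mhat om') beta p -> phat <= p).
Proof.
move=> hX LX0 LU0 finv flip fmeas _ _ RX _ UU ubarU _ _ hI hbeta xsX usU hw.
move=> xplus sel M F Mcheck Mhat pcheck phat.
have hub : Uset (ubar j) by rewrite -UU; exists j.
have RsX : forall x, Rg s x -> X x by move=> x h; rewrite -RX; exists s.
pose Ax x := [set om | region X Rg s' (f x (ubar j) (eta om))].
have mAx : forall x, Rg s x -> measurable (Ax x).
  by move=> x h; exact: fmeas (RsX x h) hub.
pose r := enum [set i : 'I_N | sel i].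
have ur : uniq r by exact: enum_uniq.
have sizer : size r = M by rewrite /r -cardE.
have psiE : forall x, Rg s x ->
    psi P f eta I (Some s) a x (region X Rg s') = fine (P (Ax x)).
  by move=> x h; rewrite /psi hI.
have psi01 : forall x, Rg s x -> 0 <= fine (P (Ax x)) <= 1.
  by move=> x h; exact: prob01 (mAx x h).
have [B hB] : exists B, forall x, X x -> `|x| <= B.
  case: (compact_bounded hX) => M0 [_ hM]; exists (M0 + 1); apply: hM; lra.
have geo : forall x i om, Rg s x -> sel i -> F i om (f x (ubar j) (eta (w i om))).
  move=> x i om hx /andP[hxi hui]; split; first exact: finv (RsX x hx) hub.
  have := flip x (xs i) (ubar j) (us i) (w i om) (RsX x hx) (xsX i) hub (usU i).
  move=> hl; apply: le_trans hl _; rewrite addrC; apply: lerD.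
    by rewrite distrC.
  apply: ler_wpM2l; first exact: ltW.
  rewrite distrC; apply: ub_le_sup; last by exists x.
  exists (B + B) => y [xh hxh <-]; apply: le_trans (ler_normB _ _) _.
  rewrite in_setE in hxi.
  by apply: lerD; apply: hB; apply: RsX.
pose Sps := [set psi P f eta I (Some s) a x (region X Rg s') | x in Rg s].
have Sps01 : forall y, Sps y -> 0 <= y <= 1.
  by move=> y [x hx <-]; rewrite psiE //; exact: psi01.
have Sps0 : ~ (Sps !=set0) -> Sps = set0.
  by move=> e; apply/seteqP; split => y // hy; apply: e; exists y.
have pc0 : 0 <= pcheck.
  rewrite /pcheck -/Sps; case: (pselect (Sps !=set0)) => [ne|e]; last by rewrite Sps0 // inf0.
  by apply: lb_le_inf => // y /Sps01 /andP[].
have ph1 : phat <= 1.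
  rewrite /phat -/Sps; case: (pselect (Sps !=set0)) => [ne|e]; last by rewrite Sps0 // sup0.
  by apply: ge_sup => // y /Sps01 /andP[].
have neS : (0 < M)%N -> Sps !=set0.
  rewrite /M => /card_gt0P [i]; rewrite memset => /andP[hxi _].
  by exists (psi P f eta I (Some s) a (xs i) (region X Rg s')), (xs i) => //; rewrite -in_setE.
have McM : forall om, (Mcheck om <= M)%N by move=> om; exact: card_le_all.
have MhM : forall om, (Mhat om <= M)%N by move=> om; exact: card_le_all.
have b2 : 0 <= beta / 2 by case/andP: hbeta => b0 _; lra.
have b21 : beta / 2 < 1 by case/andP: hbeta => _ b1; lra.
have b2p : 0 < beta / 2 by case/andP: hbeta => b0 _; lra.
pose Pdc k q := (0 < k)%N /\ (k <= M)%N /\ Plb_spec M k beta q.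
have [E1 [mE1 [PE1 hE1]]] : exists E1 : set Om', measurable E1 /\
    (P' E1 <= (beta / 2)%:E)%E /\
    forall om q, Plb_spec M (Mcheck om) beta q -> pcheck < q -> E1 om.
  have [mc [pcm hmc]] := fin_min _ Pdc pcheck M.+1.
  have badk : forall om q, Plb_spec M (Mcheck om) beta q -> pcheck < q ->
      Pdc (Mcheck om) q.
    move=> om q hs pq; split; last by split.
    rewrite lt0n; apply/negP => /eqP e; move: hs; rewrite /Plb_spec e eqxx => q0.
    by move: pq; rewrite q0 ltNge pc0.
  case: (pselect (exists k q, (k < M.+1)%N /\ Pdc k q /\ pcheck < q)); last first.
    move=> nob; exists set0; split => //; split; first by rewrite measure0 lee_fin.
    move=> om q hs pq; apply: nob; exists (Mcheck om), q; split; first by rewrite ltnS.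
    by split => //; exact: badk.
  move=> [k [q0 [_ [[k0 [kM _]] _]]]].
  have [y [x hx <-] yl] := inf_lt (neS (leq_trans k0 kM)) pcm.
  rewrite psiE // in yl.
  have [E [mE [PE hE]]] := @check_bound _ _ _ _ P _ P' N w hw (Ax x) (mAx x hx) r (beta / 2) ur b2.
  exists E; split => //; split => // om q hs pq; apply: hE; rewrite sizer.
  have kM1 : (Mcheck om < M.+1)%N by rewrite ltnS.
  have [q' [[k0' [kM' hs']] mq']] := hmc (Mcheck om) kM1 q (badk om q hs pq) pq.
  move: hs'; rewrite /Plb_spec; case: eqP => [e|_]; first by move: k0'; rewrite e.
  move=> [/andP[q0' q1'] eb]; rewrite Plb_T in eb.
  have le1 : (Mcheck om <= seq.count (fun i => `[< Ax x (w i om) >]) r)%N.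
    apply: card_le_count => i si /asboolP hF; apply/asboolP.
    exact: hF _ (geo x i om hx si).
  apply: le_trans (T_monok_le _ _ _ _ _ (psi01 x hx) le1) _.
  rewrite eb; apply: T_monop; [by case/andP: (psi01 x hx) | | by []].
  exact: ltW (lt_le_trans yl mq').
pose Pdh k q := (k < M)%N /\ Pub_spec M k beta q.
have [E2 [mE2 [PE2 hE2]]] : exists E2 : set Om', measurable E2 /\
    (P' E2 <= (beta / 2)%:E)%E /\
    forall om q, Pub_spec M (Mhat om) beta q -> q < phat -> E2 om.
  have [mh [mhp hmh]] := fin_max _ Pdh phat M.+1.
  have badk : forall om q, Pub_spec M (Mhat om) beta q -> q < phat ->
      Pdh (Mhat om) q.
    move=> om q hs pq; split => //.
    rewrite ltn_neqAle MhM andbT; apply/negP => /eqP e; move: hs; rewrite /Pub_spec e eqxx => q1.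
    by move: pq; rewrite q1 ltNge ph1.
  case: (pselect (exists k q, (k < M.+1)%N /\ Pdh k q /\ q < phat)); last first.
    move=> nob; exists set0; split => //; split; first by rewrite measure0 lee_fin.
    move=> om q hs pq; apply: nob; exists (Mhat om), q; split; first by rewrite ltnS.
    by split => //; exact: badk.
  move=> [k [q0 [_ [[kM _] _]]]].
  have [y [x hx <-] yl] := sup_gt (neS (leq_ltn_trans (leq0n k) kM)) mhp.
  rewrite psiE // in yl.
  have [E [mE [PE hE]]] := @hat_bound _ _ _ _ P _ P' N w hw (Ax x) (mAx x hx) r (beta / 2) ur b2 b21.
  exists E; split => //; split => // om q hs pq; apply: hE; rewrite sizer.
  have kM1 : (Mhat om < M.+1)%N by rewrite ltnS.
  have [q' [[kM' hs'] mq']] := hmh (Mhat om) kM1 q (badk om q hs pq) pq.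
  move: hs'; rewrite /Pub_spec; case: eqP => [e|_]; first by move: kM'; rewrite e ltnn.
  move=> [/andP[q0' q1'] eb]; rewrite Pub_T // in eb.
  have le1 : (seq.count (fun i => `[< Ax x (w i om) >]) r <= Mhat om)%N.
    apply: count_le_card => i si /asboolP hA; apply/asboolP.
    by exists (f x (ubar j) (eta (w i om))); split => //; exact: geo.
  rewrite eb lerD2l lerN2.
  have le2 : ((seq.count (fun i => `[< Ax x (w i om) >]) r).+1 <= (Mhat om).+1)%N by [].
  apply: le_trans (T_monok_le _ _ _ _ _ (psi01 x hx) le2).
  apply: T_monop => //; last by case/andP: (psi01 x hx).
  exact: ltW (le_lt_trans mq' yl).
have mU : measurable (E1 `|` E2) by exact: measurableU.
exists (~` (E1 `|` E2)); split; first exact: measurableC.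
split.
  have hu : (P' (E1 `|` E2) <= beta%:E)%E.
    apply: le_trans (measureU2 _ mE1 mE2) _.
    have -> : beta = beta / 2 + beta / 2 by field.
    rewrite EFinD; exact: leeD.
  rewrite probability_setC // (@probE _ _ _ P' _ mU) -EFinB lee_fin.
  rewrite (@probE _ _ _ P' _ mU) lee_fin in hu; lra.
move=> om hG; split.
  move=> q hs; rewrite leNgt; apply/negP => h; apply: hG; left; exact: hE1 hs h.
move=> q hs; rewrite leNgt; apply/negP => h; apply: hG; right; exact: hE2 hs h.
Qed.
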